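(* Let $2\le n<m$, $Q=\sum_{i\in[m]}q_i\mathrm B(\sigma_i)\in\mathbb B_m^*$ with all $q_i>0$ and $0\le\sigma_1<\cdots<\sigma_m\le1/2$, and let $W=D_Q(i_2,\dots,i_n;s_2,\dots,s_n)=\sum_{j\in[n]}p_j\mathrm B(\varepsilon_j)$ and $W'=D_Q(i'_2,\dots,i'_n;s'_2,\dots,s'_n)=\sum_{j\in[n]}p'_j\mathrm B(\varepsilon'_j)$ be $2n$-P$^*$-degradations of $Q$ (with $p_j,\varepsilon_j$ and $p'_j,\varepsilon'_j$ as in the construction of $D_Q$). Suppose $(i_k,s_k)=(i'_j,s'_j)$ for some $k,j\in\{2,\dots,n\}$. Then $p_k\ge p'_j$ if $\varepsilon_k\ge\varepsilon'_j$, and $p_{k-1}\ge p'_{j-1}$ if $\varepsilon_{k-1}\le\varepsilon'_{j-1}$.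
   Context: A BIDMC $W$ has input uniform on $\{0,1\}$, discrete output alphabet $\mathcal Y$ and transition probabilities $\Pr(y\mid x)$; its LR-profile is $P_W(\varepsilon)=\Pr\big(\mathcal L_W(y)=\varepsilon/(1-\varepsilon)\big)$ with $\mathcal L_W(\hat y)=\Pr(y=\hat y\mid x=0)/\Pr(y=\hat y\mid x=1)$, and $W\cong W'$ if LR-profiles coincide; channel identities are up to $\cong$. $W'\preccurlyeq W$ if there is a channel $T$ from the output alphabet of $W$ to that of $W'$ with $\Pr(y'\mid x'=a)=\sum_{y}\Pr(y\mid x=a)T(y'\mid y)$. $\mathrm B(\varepsilon)$ is the BSC with crossover probability $\varepsilon$; $\sum_iq_iW_i$ denotes the random switching channel (use $W_i$ with probability $q_i$ independently of the input and output the index $i$ along with the output). $\mathbb B_n$ is the set of BIDMCs equivalent to $\sum_{i\in[n]}p_i\mathrm B(\varepsilon_i)$ for a probability vector $(p_i)$ and $\varepsilon_i\in[0,1]$; $\mathbb B_n^*=\mathbb B_n\setminus\mathbb B_{n-1}$. $P_\epsilon(W)=\frac12\sum_{y}\min\{\Pr(y\mid x=0),\Pr(y\mid x=1)\}$. For a symmetric BIDMC $Q$ and $n\ge1$, $W$ is a $2n$-P-degradation of $Q$ if $W\in\mathbb B_n$, $W\preccurlyeq Q$ and $P_\epsilon(W)=\min\{P_\epsilon(W'):W'\in\mathbb B_n,\ W'\preccurlyeq Q\}$. Construction of $D_Q$: for $Q$ as in the claim, put $q_0=q_{m+1}=0$. Given integers $1\le i_2<\cdots<i_n\le m$ and reals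 $s_j\in[0,q_{i_j}]$, set $i_1=0$, $s_1=0$, $i_{n+1}=m+1$, $s_{n+1}=0$, and for $j\in[n]$ $$p_j=s_j+(q_{i_{j+1}}-s_{j+1})+\sum_{i_j<i<i_{j+1}}q_i,\qquad p_j\varepsilon_j=s_j\sigma_{i_j}+(q_{i_{j+1}}-s_{j+1})\sigma_{i_{j+1}}+\sum_{i_j<i<i_{j+1}}q_i\sigma_i$$ (terms with weight $0$ contribute $0$). Then $D_Q(i_2,\dots,i_n;s_2,\dots,s_n)=\sum_{j\in[n]:p_j>0}p_j\mathrm B(\varepsilon_j)$; the pairs $(i_j,s_j)$ are its splitting patterns. Such a channel is a $2n$-P$^*$-degradation of $Q$ if (i) all $p_j>0$ and $0\le\varepsilon_1<\cdots<\varepsilon_n\le1/2$; (ii) it is a $2n$-P-degradation of $Q$; (iii) for every $j\in[n]$ with $i_{j+1}=i_j+1$: if $s_j=0$ then $s_{j+1}=0$, and if $s_{j+1}=q_{i_{j+1}}$ then $s_j=q_{i_j}$. *)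

(* Defs.v *)
From HB Require Import structures.
From mathcomp Require Import all_boot all_order all_algebra.
From mathcomp Require Import reals.
Set Implicit Arguments. Unset Strict Implicit. Unset Printing Implicit Defensive.
Import Order.TTheory GRing.Theory Num.Theory.
Local Open Scope ring_scope.

Section Channels.
Variable R : realType.

(* A (raw) binary-input channel: input 0 is [false], input 1 is [true]. *)
Record chan := Chan { out : finType; tr : bool -> out -> R }.
Arguments tr : clear implicits.

Definition valid (W : chan) : Prop :=
  (forall x y, 0 <= tr W x y) /\ (forall x, \sum_(y : out W) tr W x y = 1).

(* LR-profile: P_W(e) = Pr( L_W(y) = e/(1-e) ), y distributed with uniform input.
   For e in [0,1], L_W(y) = e/(1-e) (in [0,+oo]) iff
   Pr(y|0)(1-e) = Pr(y|1) e and not both are 0. *)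
Definition lr_profile (W : chan) (e : R) : R :=
  \sum_(y : out W | (tr W false y * (1 - e) == tr W true y * e)
                    && ((tr W false y != 0) || (tr W true y != 0)))
     (tr W false y + tr W true y) / 2.

Definition chan_equiv (W W' : chan) : Prop :=
  forall e, 0 <= e <= 1 -> lr_profile W e = lr_profile W' e.

Definition degraded (W' W : chan) : Prop :=
  exists T : out W -> out W' -> R,
    (forall y y', 0 <= T y y') /\ (forall y, \sum_(y' : out W') T y y' = 1) /\
    (forall a y', tr W' a y' = \sum_(y : out W) tr W a y * T y y').

(* random switching channel sum_i w_i B(eps_i), outputting the index *)
Definition switch (I : finType) (w eps : I -> R) : chan :=
  @Chan (I * bool)%type
    (fun x yb => w yb.1 * (if yb.2 == x then 1 - eps yb.1 else eps yb.1)).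

Definition in_B (n : nat) (W : chan) : Prop :=
  valid W /\
  exists p eps : 'I_n -> R,
    (forall i, 0 <= p i) /\ \sum_i p i = 1 /\ (forall i, 0 <= eps i <= 1) /\
    chan_equiv W (switch p eps).

Definition in_Bstar (n : nat) (W : chan) : Prop := in_B n W /\ ~ in_B n.-1 W.

Definition Perr (W : chan) : R :=
  (\sum_(y : out W) Num.min (tr W false y) (tr W true y)) / 2.

Definition P_degradation (n : nat) (Q W : chan) : Prop :=
  in_B n W /\ degraded W Q /\
  forall W' : chan, in_B n W' -> degraded W' Q -> Perr W <= Perr W'.

(* Q = sum_{i in [m]} q_i B(sg_i), indices 1..m *)
Definition Qchan (m : nat) (q sg : nat -> R) : chan :=
  @switch 'I_m (fun i => q i.+1) (fun i => sg i.+1).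

(* Construction of D_Q; indices i_2..i_n given by ii, s_2..s_n by s *)
Section DQ.
Variables (m : nat) (q sg : nat -> R) (n : nat) (ii : nat -> nat) (s : nat -> R).

Definition qx (i : nat) : R := if (1 <= i <= m)%N then q i else 0.
Definition iext (j : nat) : nat :=
  if j == 1%N then 0%N else if j == n.+1 then m.+1 else ii j.
Definition sext (j : nat) : R := if (j == 1%N) || (j == n.+1) then 0 else s j.

Definition dq_p (j : nat) : R :=
  sext j + (qx (iext j.+1) - sext j.+1) + \sum_((iext j).+1 <= i < iext j.+1) qx i.

Definition dq_num (j : nat) : R :=
  sext j * sg (iext j) + (qx (iext j.+1) - sext j.+1) * sg (iext j.+1)
  + \sum_((iext j).+1 <= i < iext j.+1) qx i * sg i.

(* eps_j, defined by p_j eps_j = dq_num j (only meaningful when p_j > 0) *)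
Definition dq_eps (j : nat) : R := dq_num j / dq_p j.

Definition DQ : chan :=
  @switch {j : 'I_n | 0 < dq_p j.+1}
     (fun j => dq_p (val j).+1) (fun j => dq_eps (val j).+1).

Definition dq_params : Prop :=
  (forall j, (2 <= j <= n)%N -> (1 <= ii j <= m)%N) /\
  (forall j, (2 <= j < n)%N -> (ii j < ii j.+1)%N) /\
  (forall j, (2 <= j <= n)%N -> 0 <= s j <= q (ii j)).

Definition Pstar_degradation : Prop :=
  ((forall j, (1 <= j <= n)%N -> 0 < dq_p j) /\
   0 <= dq_eps 1 /\ (forall j, (1 <= j < n)%N -> dq_eps j < dq_eps j.+1) /\
   dq_eps n <= 1 / 2) /\
  P_degradation n (Qchan m q sg) DQ /\
  (forall j, (1 <= j <= n)%N -> iext j.+1 = (iext j).+1 ->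
     (sext j = 0 -> sext j.+1 = 0) /\
     (sext j.+1 = qx (iext j.+1) -> sext j = qx (iext j))).
End DQ.
End Channels.

(* Main.v *)
Require Import Defs.
From mathcomp Require Import all_boot all_order all_algebra.
From mathcomp Require Import reals.
From mathcomp Require Import ring lra zify.
Import Order.TTheory GRing.Theory Num.Theory.
Local Open Scope ring_scope.

Definition Hc (R : numDomainType) (w : nat -> R) (a : nat) (s : R) : R :=
  \sum_(0 <= i < a.+1) w i - s.
Definition Kc (R : numDomainType) (w sg : nat -> R) (a : nat) (s : R) : R :=
  \sum_(0 <= i < a.+1) w i * sg i - s * sg a.
Arguments Hc {R}. Arguments Kc {R}.

Lemma split_sum (R : numDomainType) (F : nat -> R) a b : (a <= b)%N ->
  \sum_(0 <= i < b.+1) F i = \sum_(0 <= i < a.+1) F i + \sum_(a.+1 <= i < b.+1) F i.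
Proof. by move=> h; rewrite (big_cat_nat _ (n:=a.+1)). Qed.
Arguments split_sum {R} F {a b}.

Lemma Sw_mono (R : numDomainType) (w : nat -> R) m1 m2 : (forall i, 0 <= w i) ->
  (m1 <= m2)%N -> \sum_(0 <= i < m1) w i <= \sum_(0 <= i < m2) w i.
Proof.
move=> w0 h; rewrite [X in _ <= X](big_cat_nat _ (n:=m1)) //= lerDl.
by apply: sumr_ge0.
Qed.

Lemma Hshift (R : numDomainType) (w : nat -> R) b : Hc w b.+1 (w b.+1) = Hc w b 0.
Proof. by rewrite /Hc big_nat_recr //= addrK subr0. Qed.

Lemma Kshift (R : numDomainType) (w sg : nat -> R) b :
  Kc w sg b.+1 (w b.+1) = Kc w sg b 0.
Proof. by rewrite /Kc big_nat_recr //= addrK mul0r subr0. Qed.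

Lemma L1 (R : realDomainType) (w sg : nat -> R) a s b t :
  (forall i, 0 <= w i) -> (forall i j, (i <= j)%N -> sg i <= sg j) ->
  0 <= s -> 0 <= t -> (a <= b)%N ->
  Kc w sg b t - Kc w sg a s <= sg b * (Hc w b t - Hc w a s).
Proof.
move=> w0 mono s0 t0 hab.
rewrite /Kc /Hc (split_sum (fun i => w i * sg i) hab) (split_sum w hab).
have h1 : \sum_(a.+1 <= i < b.+1) w i * sg i <= sg b * \sum_(a.+1 <= i < b.+1) w i.
  rewrite mulr_sumr; apply: ler_sum_nat => i /andP [_ hi].
  by rewrite [sg b * _]mulrC ler_wpM2l // mono // -ltnS.
have h2 : s * sg a <= s * sg b by rewrite ler_wpM2l // mono.
lra.
Qed.

Lemma L2 (R : realDomainType) (w sg : nat -> R) a s b t :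
  (forall i, 0 <= w i) -> (forall i j, (i <= j)%N -> sg i <= sg j) ->
  t <= w b -> (a <= b)%N ->
  sg a * (Hc w b t - Hc w a s) <= Kc w sg b t - Kc w sg a s.
Proof.
move=> w0 mono tb; rewrite leq_eqVlt => /orP [/eqP <-|hab].
  rewrite /Kc /Hc; lra.
rewrite /Kc /Hc (split_sum (fun i => w i * sg i) (ltnW hab)) (split_sum w (ltnW hab)).
rewrite !big_nat_recr //=.
have h1 : sg a * \sum_(a.+1 <= i < b) w i <= \sum_(a.+1 <= i < b) w i * sg i.
  rewrite mulr_sumr; apply: ler_sum_nat => i /andP [hi _].
  by rewrite [sg a * _]mulrC ler_wpM2l // mono // ltnW.
have h2 : (w b - t) * sg a <= (w b - t) * sg b.
  by rewrite ler_wpM2l ?subr_ge0 // mono // ltnW.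
lra.
Qed.
Arguments Sw_mono {R w m1 m2}.
Arguments L1 {R w sg a s b t}.
Arguments L2 {R w sg a s b t}.

Lemma strict_mono (R : realDomainType) (sg : nat -> R) :
  (forall i j, (i < j)%N -> sg i < sg j) -> forall i j, (i <= j)%N -> sg i <= sg j.
Proof.
move=> h i j; rewrite leq_eqVlt => /orP [/eqP ->//|/h /ltW //].
Qed.
Arguments strict_mono {R sg}.

Lemma part1 (R : realFieldType) (w sg : nat -> R) a s b t c u :
 (forall i, 0 <= w i) -> (forall i j, (i < j)%N -> sg i < sg j) ->
 0 <= s -> 0 <= t -> t <= w b -> 0 <= u -> u <= w c ->
 (a < b)%N -> (a < c)%N -> (forall i, (a < i < b)%N -> 0 < w i) ->
 (b = a.+1 -> s = 0 -> t = 0) ->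
 0 < Hc w b t - Hc w a s -> 0 < Hc w c u - Hc w a s ->
 (Kc w sg c u - Kc w sg a s) / (Hc w c u - Hc w a s) <=
   (Kc w sg b t - Kc w sg a s) / (Hc w b t - Hc w a s) ->
 Hc w c u - Hc w a s <= Hc w b t - Hc w a s.
Proof.
move=> w0 smono s0 t0 tb u0 uc hab hac hint h3 hP hP' hyp.
have mono := strict_mono smono.
rewrite leNgt; apply/negP => hlt.
have hbc : (b <= c)%N.
  rewrite leqNgt; apply/negP => hcb.
  have e1 : Hc w c u <= \sum_(0 <= i < c.+1) w i by rewrite /Hc lerBlDr lerDl.
  have e2 := Sw_mono w0 hcb.
  have e3 : Hc w b t = \sum_(0 <= i < b) w i + (w b - t).
    by rewrite /Hc big_nat_recr //= addrA.
  lra.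
set P := Hc w b t - Hc w a s in hP hyp hlt *.
set num := Kc w sg b t - Kc w sg a s in hyp.
set Dl := Hc w c u - Hc w b t.
set D := Kc w sg c u - Kc w sg b t.
have eP' : Hc w c u - Hc w a s = P + Dl by rewrite /P /Dl; ring.
have eN' : Kc w sg c u - Kc w sg a s = num + D by rewrite /num /D; ring.
rewrite eP' eN' in hyp hlt.
have hDl : 0 < Dl by lra.
have {}hyp : (num + D) * P <= num * (P + Dl).
  move: hyp; rewrite ler_pdivrMr; last lra.
  by rewrite mulrAC ler_pdivlMr.
have hnum : num <= sg b * P by apply: (L1 w0 mono s0 t0 (ltnW hab)).
have hD : sg b * Dl <= D by apply: (L2 w0 mono uc hbc).
have enum : num = sg b * P.
  have : (sg b * P - num) * Dl <= 0 by nra.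
  rewrite pmulr_lle0 //; lra.
have eD : D = sg b * Dl.
  have : (D - sg b * Dl) * P <= 0 by nra.
  rewrite pmulr_lle0 //; lra.
have {}enum : Kc w sg b t - Kc w sg a s = sg b * (Hc w b t - Hc w a s) by exact enum.
have {}eD : Kc w sg c u - Kc w sg b t = sg b * (Hc w c u - Hc w b t) by exact eD.
have {}hDl : 0 < Hc w c u - Hc w b t by exact hDl.
clear -w0 smono mono s0 t0 tb u0 uc hab hint h3 hbc enum eD hDl.
case: b hab tb t0 hint h3 hbc enum eD hDl => [//|b0] hab tb t0 hint h3 hbc enum eD hDl.
have hab0 : (a <= b0)%N by [].
have l1 := L1 w0 mono s0 (lexx 0) hab0.
have ev : Hc w b0.+1 t - Hc w b0 0 = w b0.+1 - t.
  by rewrite /Hc big_nat_recr //=; ring.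
have ek : Kc w sg b0.+1 t - Kc w sg b0 0 = (w b0.+1 - t) * sg b0.+1.
  by rewrite /Kc big_nat_recr //=; ring.
have hv0 : Hc w b0 0 - Hc w a s = s + \sum_(a.+1 <= i < b0.+1) w i.
  by rewrite /Hc (split_sum w hab0); ring.
have hsum0 : 0 <= \sum_(a.+1 <= i < b0.+1) w i by apply: sumr_ge0.
have hlt0 := smono _ _ (ltnSn b0).
have hv : Hc w b0 0 - Hc w a s = 0.
  have : (sg b0.+1 - sg b0) * (Hc w b0 0 - Hc w a s) <= 0.
    nra.
  rewrite pmulr_rle0 ?subr_gt0 //; lra.
have es : s = 0 by lra.
have eb : b0 = a.
  apply/eqP; rewrite eqn_leq hab0 andbT leqNgt; apply/negP => hlt2.
  have : 0 < \sum_(a.+1 <= i < b0.+1) w i.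
    rewrite big_ltn // ltr_pwDl //; first by apply: hint; rewrite ltnSn ltnS.
    by apply: sumr_ge0.
  lra.
subst b0.
have et : t = 0 by apply: h3.
subst t.
have hbc2 : (a.+2 <= c)%N.
  rewrite ltn_neqAle hbc andbT; apply/negP => /eqP ec; subst c.
  rewrite /Hc in hDl; lra.
have l2 := L2 (sg := sg) (s := w a.+2) w0 mono uc hbc2.
rewrite Hshift Kshift in l2.
have := smono _ _ (ltnSn a.+1).
nra.
Qed.

Lemma part2 (R : realFieldType) (w sg : nat -> R) a s a' s' b t :
 (forall i, 0 <= w i) -> (forall i j, (i < j)%N -> sg i < sg j) ->
 0 <= s -> s <= w a -> 0 <= s' -> s' <= w a' -> 0 <= t -> t <= w b ->
 (a < b)%N -> (a' < b)%N -> (forall i, (a < i < b)%N -> 0 < w i) ->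
 (b = a.+1 -> t = w b -> s = w a) ->
 0 < Hc w b t - Hc w a s -> 0 < Hc w b t - Hc w a' s' ->
 (Kc w sg b t - Kc w sg a s) / (Hc w b t - Hc w a s) <=
   (Kc w sg b t - Kc w sg a' s') / (Hc w b t - Hc w a' s') ->
 Hc w b t - Hc w a' s' <= Hc w b t - Hc w a s.
Proof.
move=> w0 smono s0 sa s'0 s'a t0 tb hab ha'b hint h3 hP hP' hyp.
have mono := strict_mono smono.
rewrite leNgt; apply/negP => hlt.
have ha'a : (a' <= a)%N.
  rewrite leqNgt; apply/negP => haa.
  have e1 : Hc w a s <= \sum_(0 <= i < a.+1) w i by rewrite /Hc lerBlDr lerDl.
  have e2 := Sw_mono w0 haa.
  have e3 : Hc w a' s' = \sum_(0 <= i < a') w i + (w a' - s').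
    by rewrite /Hc big_nat_recr //= addrA.
  lra.
set P := Hc w b t - Hc w a s in hP hyp hlt *.
set num := Kc w sg b t - Kc w sg a s in hyp.
set Dl := Hc w a s - Hc w a' s'.
set D := Kc w sg a s - Kc w sg a' s'.
have eP' : Hc w b t - Hc w a' s' = P + Dl by rewrite /P /Dl; ring.
have eN' : Kc w sg b t - Kc w sg a' s' = num + D by rewrite /num /D; ring.
rewrite eP' eN' in hyp hlt.
have hDl : 0 < Dl by lra.
have {}hyp : num * (P + Dl) <= (num + D) * P.
  move: hyp; rewrite ler_pdivrMr // mulrAC ler_pdivlMr //; lra.
have hnum : sg a * P <= num by apply: (L2 w0 mono tb (ltnW hab)).
have hD : D <= sg a * Dl by apply: (L1 w0 mono s'0 s0 ha'a).
have enum : num = sg a * P.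
  have : (num - sg a * P) * Dl <= 0 by nra.
  rewrite pmulr_lle0 //; lra.
have eD : D = sg a * Dl.
  have : (sg a * Dl - D) * P <= 0 by nra.
  rewrite pmulr_lle0 //; lra.
have {}enum : Kc w sg b t - Kc w sg a s = sg a * (Hc w b t - Hc w a s) by exact enum.
have {}eD : Kc w sg a s - Kc w sg a' s' = sg a * (Hc w a s - Hc w a' s') by exact eD.
have {}hDl : 0 < Hc w a s - Hc w a' s' by exact hDl.
clear -w0 smono mono s0 sa s'0 s'a t0 tb hab hint h3 ha'a enum eD hDl.
have l2 := L2 (sg := sg) (s := w a.+1) w0 mono tb hab.
rewrite Hshift Kshift in l2.
have eu : Hc w b t - Hc w a 0 = \sum_(a.+1 <= i < b) w i + (w b - t).
  by rewrite /Hc (split_sum w (ltnW hab)) [\sum_(a.+1 <= i < b.+1) _]big_nat_recr //=; ring.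
have eh : Hc w a 0 - Hc w a s = s by rewrite /Hc; ring.
have ek : Kc w sg a 0 - Kc w sg a s = s * sg a by rewrite /Kc; ring.
have hsum0 : 0 <= \sum_(a.+1 <= i < b) w i by apply: sumr_ge0.
have hlt0 := smono _ _ (ltnSn a).
have hu : Hc w b t - Hc w a 0 = 0.
  have : (sg a.+1 - sg a) * (Hc w b t - Hc w a 0) <= 0 by nra.
  rewrite pmulr_rle0 ?subr_gt0 //; lra.
have et : t = w b by lra.
have eb : b = a.+1.
  apply/eqP; rewrite eqn_leq hab andbT leqNgt; apply/negP => hlt2.
  have : 0 < \sum_(a.+1 <= i < b) w i.
    rewrite big_ltn // ltr_pwDl //; first by apply: hint; rewrite ltnSn.
    by apply: sumr_ge0.
  lra.
have es : s = w a by apply: h3.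
subst s; clear hsum0 hu eu l2 ek eh et hint h3 enum.
case: a ha'a eD hDl hlt0 hab sa s0 eb => [|a0] ha'a eD hDl hlt0 hab sa s0 eb.
  by move: ha'a; rewrite leqn0 => /eqP ?; subst a'; rewrite /Hc in hDl; lra.
have ha'0 : (a' <= a0)%N.
  rewrite -ltnS ltn_neqAle ha'a andbT; apply/negP => /eqP ea; subst a'.
  rewrite /Hc in hDl; lra.
have l1 := L1 (sg := sg) (t := 0) w0 mono s'0 (lexx 0) ha'0.
rewrite Hshift Kshift in eD hDl.
have := smono _ _ (ltnSn a0).
nra.
Qed.

Lemma Hdiff (R : numDomainType) (w : nat -> R) a s b t : (a < b)%N ->
  Hc w b t - Hc w a s = s + (w b - t) + \sum_(a.+1 <= i < b) w i.
Proof.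
move=> hab; rewrite /Hc (split_sum w (ltnW hab)) [\sum_(a.+1 <= i < b.+1) _]big_nat_recr //=; ring.
Qed.

Lemma Kdiff (R : numDomainType) (w sg : nat -> R) a s b t : (a < b)%N ->
  Kc w sg b t - Kc w sg a s = s * sg a + (w b - t) * sg b + \sum_(a.+1 <= i < b) w i * sg i.
Proof.
move=> hab; rewrite /Kc (split_sum (fun i => w i * sg i) (ltnW hab)) [\sum_(a.+1 <= i < b.+1) _]big_nat_recr //=; ring.
Qed.

Definition tau (R : realType) (m : nat) (sg : nat -> R) (i : nat) : R :=
  if i == 0%N then sg 1%N - 1 else if (m < i)%N then sg m + i%:R else sg i.
Arguments tau {R}.

Lemma tau_smono (R : realType) (m : nat) (sg : nat -> R) : (1 <= m)%N ->
  (forall i, (1 <= i < m)%N -> sg i < sg i.+1) ->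
  forall i j, (i < j)%N -> tau m sg i < tau m sg j.
Proof.
move=> hm hsg; apply: (@homo_ltn _ _ (fun x y => x < y)); first by move=> y x z; apply: lt_trans.
move=> i; rewrite /tau /=.
case: i => [|i] /=.
  by rewrite ltnNge hm /= ltrBlDr ltrDl ltr01.
case: (ltngtP m i.+1) => h.
- by rewrite ltnS (ltnW h) ltrD2l ltr_nat.
- by rewrite ltnS leqNgt h /=; apply: hsg; rewrite h.
- by subst m; rewrite ltnSn ltrDl ltr0Sn.
Qed.

Lemma qx_ge0 (R : realType) m (q : nat -> R) :
  (forall i, (1 <= i <= m)%N -> 0 < q i) -> forall i, 0 <= qx m q i.
Proof. by move=> hq i; rewrite /qx; case: ifP => // /hq /ltW. Qed.

Lemma qx_out (R : realType) m (q : nat -> R) i : ~~ (1 <= i <= m)%N -> qx m q i = 0.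
Proof. by rewrite /qx => /negbTE ->. Qed.

Lemma qx_in (R : realType) m (q : nat -> R) i : (1 <= i <= m)%N -> qx m q i = q i.
Proof. by rewrite /qx => ->. Qed.

Lemma iext_cases (R : realType) m n (ii : nat -> nat) (s : nat -> R) J :
  (2 <= n)%N -> (1 <= J <= n.+1)%N ->
  (J = 1%N /\ iext m n ii J = 0%N /\ sext n s J = 0) \/
  (J = n.+1 /\ iext m n ii J = m.+1 /\ sext n s J = 0) \/
  ((2 <= J <= n)%N /\ iext m n ii J = ii J /\ sext n s J = s J).
Proof.
move=> hn /andP [h1 h2]; rewrite /iext /sext.
have [->|n1] := eqVneq J 1%N; first by left.
have [->|nn] := eqVneq J n.+1.
  by right; left.
right; right; split => //.
rewrite ltn_neqAle eq_sym n1 h1 /=.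
by rewrite -ltnS ltn_neqAle nn h2.
Qed.
Arguments iext_cases {R} m {n} ii s {J}.

Lemma iext_lt (R : realType) m n (q : nat -> R) (ii : nat -> nat) (s : nat -> R) J :
  (2 <= n)%N -> (n < m)%N -> dq_params m q n ii s -> (1 <= J <= n)%N ->
  (iext m n ii J < iext m n ii J.+1)%N.
Proof.
move=> hn hnm [hp1 [hp2 hp3]] hJ.
have hJ1 : (1 <= J <= n.+1)%N by lia.
have hJ2 : (1 <= J.+1 <= n.+1)%N by lia.
case: (iext_cases m ii s hn hJ1) => [[e1 [-> _]]|[[e1 _]|[e1 [-> _]]]]; first subst J.
- case: (iext_cases m ii s hn hJ2) => [[e2 _]|[[e2 _]|[e2 [-> _]]]]; try lia.
  by have := hp1 2%N; lia.
- lia.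
- case: (iext_cases m ii s hn hJ2) => [[e2 _]|[[e2 [-> _]]|[e2 [-> _]]]]; try lia.
  + by have := hp1 J; lia.
  + by apply: hp2; lia.
Qed.

Lemma iext_le (R : realType) m n (q : nat -> R) (ii : nat -> nat) (s : nat -> R) J :
  (2 <= n)%N -> dq_params m q n ii s -> (1 <= J <= n.+1)%N ->
  (iext m n ii J <= m.+1)%N.
Proof.
move=> hn [hp1 _] hJ.
case: (iext_cases m ii s hn hJ) => [[_ [-> _]]|[[_ [-> _]]|[e [-> _]]]] //.
by have := hp1 J e; lia.
Qed.

Lemma sext_bnd (R : realType) m n (q : nat -> R) (ii : nat -> nat) (s : nat -> R) J :
  (2 <= n)%N -> dq_params m q n ii s -> (1 <= J <= n.+1)%N ->
  0 <= sext n s J /\ sext n s J <= qx m q (iext m n ii J).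
Proof.
move=> hn [hp1 [_ hp3]] hJ.
case: (iext_cases m ii s hn hJ) => [[_ [-> ->]]|[[_ [-> ->]]|[e [-> ->]]]].
- by rewrite qx_out.
- by rewrite qx_out //; lia.
- by rewrite qx_in ?hp1 //; apply/andP; apply: hp3.
Qed.

Lemma tau_ext (R : realType) m n (q sg : nat -> R) (ii : nat -> nat) (s : nat -> R) J :
  (2 <= n)%N -> dq_params m q n ii s -> (1 <= J <= n.+1)%N ->
  tau m sg (iext m n ii J) = sg (iext m n ii J) \/
  (sext n s J = 0 /\ qx m q (iext m n ii J) = 0).
Proof.
move=> hn [hp1 _] hJ.
case: (iext_cases m ii s hn hJ) => [[_ [-> ->]]|[[_ [-> ->]]|[e [-> _]]]].
- by right; rewrite qx_out.
- by right; rewrite qx_out //; lia.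
- left; have := hp1 J e; rewrite /tau => h.
  have -> : (ii J == 0%N) = false by lia.
  by have -> : (m < ii J)%N = false by lia.
Qed.

Lemma tau_in (R : realType) m (sg : nat -> R) i : (1 <= i <= m)%N -> tau m sg i = sg i.
Proof.
rewrite /tau => h.
have -> : (i == 0%N) = false by lia.
by have -> : (m < i)%N = false by lia.
Qed.

Lemma dqp_H (R : realType) m n (q : nat -> R) (ii : nat -> nat) (s : nat -> R) J :
  (2 <= n)%N -> (n < m)%N -> dq_params m q n ii s -> (1 <= J <= n)%N ->
  dq_p m q n ii s J = Hc (qx m q) (iext m n ii J.+1) (sext n s J.+1)
                      - Hc (qx m q) (iext m n ii J) (sext n s J).
Proof. by move=> hn hnm hp hJ; rewrite Hdiff //; apply: (@iext_lt R m n q ii s J hn hnm hp hJ). Qed.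

Lemma dqnum_K (R : realType) m n (q sg : nat -> R) (ii : nat -> nat) (s : nat -> R) J :
  (2 <= n)%N -> (n < m)%N -> dq_params m q n ii s -> (1 <= J <= n)%N ->
  dq_num m q sg n ii s J = Kc (qx m q) (tau m sg) (iext m n ii J.+1) (sext n s J.+1)
                      - Kc (qx m q) (tau m sg) (iext m n ii J) (sext n s J).
Proof.
move=> hn hnm hp hJ; rewrite Kdiff; last by apply: (@iext_lt R m n q ii s J hn hnm hp hJ).
rewrite /dq_num.
have hJ1 : (1 <= J <= n.+1)%N by lia.
have hJ2 : (1 <= J.+1 <= n.+1)%N by lia.
congr (_ + _ + _).
- by case: (@tau_ext R m n q sg ii s J hn hp hJ1) => [->|[-> _]]; rewrite ?mul0r.
- by case: (@tau_ext R m n q sg ii s J.+1 hn hp hJ2) => [->|[-> ->]]; rewrite ?subrr ?mul0r.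
- apply: eq_big_nat => i _.
  case h : (1 <= i <= m)%N; first by rewrite tau_in.
  by rewrite qx_out ?h // !mul0r.
Qed.

Lemma mid_pos (R : realType) m n (q : nat -> R) (ii : nat -> nat) (s : nat -> R) J :
  (2 <= n)%N -> (forall i, (1 <= i <= m)%N -> 0 < q i) ->
  dq_params m q n ii s -> (1 <= J <= n)%N ->
  forall i, (iext m n ii J < i < iext m n ii J.+1)%N -> 0 < qx m q i.
Proof.
move=> hn hq hp hJ i hi.
have hJ2 : (1 <= J.+1 <= n.+1)%N by lia.
have := @iext_le R m n q ii s J.+1 hn hp hJ2 => hle.
have hin : (1 <= i <= m)%N by lia.
by rewrite qx_in // hq.
Qed.

Arguments dqnum_K {R m n q} sg {ii s J}.
Arguments dqp_H {R m n q ii s J}.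
Arguments qx_ge0 {R m q}.

Lemma iext_mid (R : realType) m n (ii : nat -> nat) (s : nat -> R) J :
  (2 <= J <= n)%N -> iext m n ii J = ii J /\ sext n s J = s J.
Proof.
move=> h; rewrite /iext /sext.
have -> : (J == 1%N) = false by lia.
by have -> : (J == n.+1) = false by lia.
Qed.

Theorem lemma9 (R : realType) (m n : nat) (q sg : nat -> R)
  (ii ii' : nat -> nat) (s s' : nat -> R) (k j : nat) :
  (2 <= n)%N -> (n < m)%N ->
  (forall i, (1 <= i <= m)%N -> 0 < q i) ->
  \sum_(1 <= i < m.+1) q i = 1 ->
  0 <= sg 1%N -> (forall i, (1 <= i < m)%N -> sg i < sg i.+1) -> sg m <= 1 / 2 ->
  in_Bstar m (Qchan m q sg) ->
  dq_params m q n ii s -> dq_params m q n ii' s' ->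
  Pstar_degradation m q sg n ii s -> Pstar_degradation m q sg n ii' s' ->
  (2 <= k <= n)%N -> (2 <= j <= n)%N ->
  ii k = ii' j -> s k = s' j ->
  (dq_eps m q sg n ii' s' j <= dq_eps m q sg n ii s k ->
     dq_p m q n ii' s' j <= dq_p m q n ii s k) /\
  (dq_eps m q sg n ii s k.-1 <= dq_eps m q sg n ii' s' j.-1 ->
     dq_p m q n ii' s' j.-1 <= dq_p m q n ii s k.-1).
Proof.
move=> hn hnm hq _ _ hsg _ _ hp hp' [[hpos _] [_ h3]] [[hpos' _] [_ h3']] hk hj eii es.
have w0 := qx_ge0 hq.
have smono : forall i j, (i < j)%N -> tau m sg i < tau m sg j.
  by apply: tau_smono => //; lia.
have [ik sk] := @iext_mid R m n ii s k hk.
have [ij sj] := @iext_mid R m n ii' s' j hj.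
have ea : iext m n ii' j = iext m n ii k by rewrite ik ij eii.
have es2 : sext n s' j = sext n s k by rewrite sk sj es.
split.
- have hk1 : (1 <= k <= n)%N by lia.
  have hj1 : (1 <= j <= n)%N by lia.
  rewrite /dq_eps (dqnum_K sg hn hnm hp hk1) (dqnum_K sg hn hnm hp' hj1)
    (dqp_H hn hnm hp hk1) (dqp_H hn hnm hp' hj1) ea es2.
  have hP := hpos k hk1; have hP' := hpos' j hj1.
  rewrite (dqp_H hn hnm hp hk1) in hP.
  rewrite (dqp_H hn hnm hp' hj1) ea es2 in hP'.
  have hk2 : (1 <= k <= n.+1)%N by lia.
  have hk3 : (1 <= k.+1 <= n.+1)%N by lia.
  have hj3 : (1 <= j.+1 <= n.+1)%N by lia.
  have [s0 _] := @sext_bnd R m n q ii s k hn hp hk2.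
  have [t0 tb] := @sext_bnd R m n q ii s k.+1 hn hp hk3.
  have [u0 uc] := @sext_bnd R m n q ii' s' j.+1 hn hp' hj3.
  have hab := @iext_lt R m n q ii s k hn hnm hp hk1.
  have hac := @iext_lt R m n q ii' s' j hn hnm hp' hj1.
  rewrite ea in hac.
  have hint := @mid_pos R m n q ii s k hn hq hp hk1.
  have h3k : iext m n ii k.+1 = (iext m n ii k).+1 -> sext n s k = 0 -> sext n s k.+1 = 0.
    by move=> e; case: (h3 k hk1 e).
  exact: (@part1 R (qx m q) (tau m sg) _ _ _ _ _ _ w0 smono s0 t0 tb u0 uc hab hac hint h3k hP hP').
- clear eii es; case: k hk ik sk ea es2 => [//|k0] hk ik sk ea es2.
  case: j hj ij sj ea es2 => [//|j0] hj ij sj ea es2 /=.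
  have hk1 : (1 <= k0 <= n)%N by lia.
  have hj1 : (1 <= j0 <= n)%N by lia.
  rewrite /dq_eps (dqnum_K sg hn hnm hp hk1) (dqnum_K sg hn hnm hp' hj1)
    (dqp_H hn hnm hp hk1) (dqp_H hn hnm hp' hj1) ea es2.
  have hP := hpos k0 hk1; have hP' := hpos' j0 hj1.
  rewrite (dqp_H hn hnm hp hk1) in hP.
  rewrite (dqp_H hn hnm hp' hj1) ea es2 in hP'.
  have hk2 : (1 <= k0 <= n.+1)%N by lia.
  have hk3 : (1 <= k0.+1 <= n.+1)%N by lia.
  have hj2 : (1 <= j0 <= n.+1)%N by lia.
  have [s0 sa] := @sext_bnd R m n q ii s k0 hn hp hk2.
  have [t0 tb] := @sext_bnd R m n q ii s k0.+1 hn hp hk3.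
  have [s'0 s'a] := @sext_bnd R m n q ii' s' j0 hn hp' hj2.
  have hab := @iext_lt R m n q ii s k0 hn hnm hp hk1.
  have ha'b := @iext_lt R m n q ii' s' j0 hn hnm hp' hj1.
  rewrite ea in ha'b.
  have hint := @mid_pos R m n q ii s k0 hn hq hp hk1.
  have h3k : iext m n ii k0.+1 = (iext m n ii k0).+1 ->
      sext n s k0.+1 = qx m q (iext m n ii k0.+1) -> sext n s k0 = qx m q (iext m n ii k0).
    by move=> e; case: (h3 k0 hk1 e).
  exact: (@part2 R (qx m q) (tau m sg) _ _ _ _ _ _ w0 smono s0 sa s'0 s'a t0 tb hab ha'b hint h3k hP hP').
Qed.
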